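(* Let $f:\mathcal X^n\to\mathcal T$ with $\mathcal T$ finite, $\varepsilon>0$, and $L_{0,1}(s,t)=\mathbf 1\{s\ne t\}$. Let $M$ be the discrete inverse sensitivity mechanism run with privacy parameter $4\varepsilon$. Then $M$ is $4\varepsilon$-differentially private, and for every $\varepsilon$-differentially private $L_{0,1}$-unbiased mechanism $M_{\mathrm{unb}}$ and every $x\in\mathcal X^n$, $$\mathbb E[L_{0,1}(M(x),f(x))]\le \mathbb E[L_{0,1}(M_{\mathrm{unb}}(x),f(x))].$$ That is, the inverse sensitivity mechanism is $4$-optimal against $L_{0,1}$-unbiased mechanisms.
   Context: $d_H$ is the Hamming distance on $\mathcal X^n$; $x,x'$ are neighboring if $d_H(x,x')\le1$. A mechanism $M$ is $\varepsilon$-differentially private if $\mathbb P(M(x)\in S)\le e^\varepsilon\mathbb P(M(x')\in S)$ for all neighboring $x,x'$ and measurable $S$. A mechanism $M$ is $L$-unbiased if $\mathbb E[L(M(x),f(x))]\le\mathbb E[L(M(x),t)]$ for all $x\in\mathcal X^n$, $t\in\mathcal T$. The inverse sensitivity is $\mathrm{len}_f(x;t)=\inf\{d_H(x,x'):f(x')=t\}$ ($\inf\emptyset=+\infty$, $e^{-\infty}=0$), and the discrete inverse sensitivity mechanism with parameter $\varepsilon'$ outputs $t$ with probability $e^{-\mathrm{len}_f(x;t)\varepsilon'/2}\big/\sum_{s\in\mathcal T}e^{-\mathrm{len}_f(x;s)\varepsilon'/2}$. *)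

(* Defs.v *)
From HB Require Import structures.
From mathcomp Require Import all_boot all_order all_algebra.
From mathcomp Require Import all_classical all_reals all_analysis.
Set Implicit Arguments. Unset Strict Implicit. Unset Printing Implicit Defensive.
Import Order.TTheory GRing.Theory Num.Theory.
Local Open Scope ring_scope.

Definition hamming (X : eqType) (n : nat) (x x' : n.-tuple X) : nat :=
  #|[set i : 'I_n | tnth x i != tnth x' i]|.

(* A mechanism with (finite) output space T: for each dataset, a
   probability mass function on T (T carries the discrete sigma-algebra). *)
Definition mechanism (R : realType) (X : eqType) (n : nat) (T : finType) :=
  n.-tuple X -> T -> R.

Definition is_mechanism (R : realType) (X : eqType) (n : nat) (T : finType)
  (M : mechanism R X n T) : Prop :=
  forall x, (forall t, 0 <= M x t) /\ \sum_(t : T) M x t = 1.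

Definition prob (R : realType) (X : eqType) (n : nat) (T : finType)
  (M : mechanism R X n T) (x : n.-tuple X) (S : {set T}) : R :=
  \sum_(t in S) M x t.

Definition diff_private (R : realType) (X : eqType) (n : nat) (T : finType)
  (eps : R) (M : mechanism R X n T) : Prop :=
  forall x x' : n.-tuple X, (hamming x x' <= 1)%N ->
    forall S : {set T}, prob M x S <= expR eps * prob M x' S.

Definition exp_loss (R : realType) (X : eqType) (n : nat) (T : finType)
  (L : T -> T -> R) (M : mechanism R X n T) (x : n.-tuple X) (t : T) : R :=
  \sum_(s : T) M x s * L s t.

Definition unbiased (R : realType) (X : eqType) (n : nat) (T : finType)
  (L : T -> T -> R) (f : n.-tuple X -> T) (M : mechanism R X n T) : Prop :=
  forall (x : n.-tuple X) (t : T), exp_loss L M x (f x) <= exp_loss L M x t.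

Definition L01 (R : realType) (T : finType) (s t : T) : R := (s != t)%:R.

(* inverse sensitivity len_f(x;t) = inf {d_H(x,x') : f x' = t}, in \bar R
   (inf of the empty set is +oo) *)
Definition inv_sens (R : realType) (X : eqType) (n : nat) (T : finType)
  (f : n.-tuple X -> T) (x : n.-tuple X) (t : T) : \bar R :=
  ereal_inf [set ((hamming x x')%:R)%:E | x' in [set x' | f x' = t]].

(* unnormalized weight exp(-len_f(x;t) * eps'/2), with exp(-oo) = 0 *)
Definition inv_sens_weight (R : realType) (X : eqType) (n : nat) (T : finType)
  (f : n.-tuple X -> T) (eps' : R) (x : n.-tuple X) (t : T) : R :=
  fine (expeR (- (@inv_sens R X n T f x t * (eps' / 2)%:E))%E).

Definition inv_sens_mech (R : realType) (X : eqType) (n : nat) (T : finType)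
  (f : n.-tuple X -> T) (eps' : R) : mechanism R X n T :=
  fun x t => inv_sens_weight f eps' x t / \sum_(s : T) inv_sens_weight f eps' x s.

(* Main.v *)
Require Import Defs.
From HB Require Import structures.
From mathcomp Require Import all_boot all_order all_algebra.
From mathcomp Require Import all_classical all_reals all_analysis.
From mathcomp Require Import ring lra.
Import Order.TTheory GRing.Theory Num.Theory.
Set Implicit Arguments. Unset Strict Implicit.
Local Open Scope ring_scope.

Section Ham.
Variables (X : eqType) (n : nat).
Implicit Types x y z : n.-tuple X.

Lemma hamming_sym x y : hamming x y = hamming y x.
Proof. by rewrite /hamming; apply: eq_card => i; rewrite !inE eq_sym. Qed.

Lemma hamming_xx x : hamming x x = 0%N.
Proof. by rewrite /hamming; apply/eqP; rewrite cards_eq0; apply/eqP/setP=> i; rewrite !inE eqxx. Qed.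

Lemma hamming_tri x y z : (hamming x z <= hamming x y + hamming y z)%N.
Proof.
rewrite /hamming; apply: leq_trans (leq_card_setU _ _).
apply: subset_leq_card; apply/fintype.subsetP=> i; rewrite !inE.
by case: (tnth x i =P tnth y i) => [->|].
Qed.

Lemma hamming0 x y : hamming x y = 0%N -> x = y.
Proof.
rewrite /hamming => /eqP; rewrite cards_eq0 => /eqP H.
apply: eq_from_tnth => i; apply/eqP; apply/negPn/negP => Hi.
by have := finset.in_set0 i; rewrite -H inE Hi.
Qed.

Lemma hamming_step x y k : hamming x y = k.+1 ->
  exists z, (hamming x z <= 1)%N /\ hamming z y = k.
Proof.
move=> Hk.
have : [set i : 'I_n | tnth x i != tnth y i] != finset.set0.
  by rewrite -cards_eq0 -/(hamming x y) Hk.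
case/set0Pn => i; rewrite inE => Hi.
pose z := [tuple (if j == i then tnth y j else tnth x j) | j < n].
exists z; split.
  rewrite /hamming -(cards1 i); apply: subset_leq_card; apply/fintype.subsetP=> j.
  by rewrite !inE tnth_mktuple; case: (j =P i) => // _; rewrite eqxx.
rewrite /hamming; have -> : [set j : 'I_n | tnth z j != tnth y j] = [set j | tnth x j != tnth y j] :\ i.
  apply/setP=> j; rewrite !inE tnth_mktuple.
  by case: (j =P i) => [->|]; rewrite ?eqxx.
by move: Hk; rewrite /hamming (cardsD1 i) inE Hi; case.
Qed.
End Ham.

Lemma weightP (R : realType) (X : eqType) (n : nat) (T : finType)
  (f : n.-tuple X -> T) (e : R) (he : 0 < e) (x : n.-tuple X) (t : T) :
  ((forall x', f x' != t) /\ inv_sens_weight f e x t = 0) \/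
  exists x0, [/\ f x0 = t, (forall x', f x' = t -> (hamming x x0 <= hamming x x')%N)
     & inv_sens_weight f e x t = expR (- ((hamming x x0)%:R * (e / 2)))].
Proof.
case: (pselect (exists x', f x' = t)) => [ex|nex]; last first.
  left; split; first by move=> x'; apply/eqP => h; apply: nex; exists x'.
  rewrite /inv_sens_weight /inv_sens.
  have -> : [set x' | f x' = t]%classic = set0.
    by apply/seteqP; split=> y //= fy; apply: nex; exists y.
  rewrite image_set0 ereal_inf0 mulyr gtr0_sg ?mul1e //.
  by rewrite divr_gt0.
pose P := fun k => `[< exists x', f x' = t /\ hamming x x' = k >].
have exP : exists k, P k.
  by case: ex => x' fx'; exists (hamming x x'); apply/asboolP; exists x'.
case: (ex_minnP exP) => m /asboolP [x0 [fx0 hm]] minm.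
right; exists x0; split => //.
  move=> x' fx'; rewrite hm; apply: minm; apply/asboolP; exists x'; split => //.
rewrite /inv_sens_weight; have -> : @inv_sens R X n T f x t = ((hamming x x0)%:R)%:E.
  apply/le_anti/andP; split.
    by apply: ereal_inf_lbound; exists x0.
  apply/ereal_infP => _ [x' /= fx' <-].
  rewrite lee_fin ler_nat hm; apply: minm; apply/asboolP; exists x'; split => //.
by rewrite -EFinM -EFinN.
Qed.

Section Main.
Variables (R : realType) (X : eqType) (n : nat) (T : finType).
Implicit Types (x y : n.-tuple X) (M : mechanism R X n T).

Lemma exp_loss01 M x t : exp_loss (@L01 R T) M x t = \sum_s M x s - M x t.
Proof.
rewrite /exp_loss /L01 (bigD1 t) //= eqxx mulr0 add0r.
rewrite [in RHS](bigD1 t) //= addrAC subrr add0r.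
by apply: eq_bigr => s st; rewrite st mulr1.
Qed.

Lemma group_dp (eps : R) M : diff_private eps M ->
  forall k x y t, hamming x y = k -> M x t <= expR (k%:R * eps) * M y t.
Proof.
move=> dp; elim=> [|k IH] x y t hk.
  by rewrite (@hamming0 _ _ _ _ hk) mul0r expR0 mul1r.
case: (@hamming_step _ _ _ _ _ hk) => z [hz hzy].
have h1 : M x t <= expR eps * M z t.
  by have := dp x z hz (finset.set1 t); rewrite /prob !big_set1.
apply: (le_trans h1).
have -> : k.+1%:R * eps = eps + k%:R * eps by rewrite -natr1 mulrDl mul1r addrC.
by rewrite expRD -mulrA ler_wpM2l ?expR_ge0 // IH.
Qed.

Variables (f : n.-tuple X -> T) (e : R) (he : 0 < e).
Notation w := (inv_sens_weight f e).

Lemma weight_ge0 x t : 0 <= w x t.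
Proof. by case: (weightP f he x t) => [[_ ->]|[x0 [_ _ ->]]]; rewrite ?expR_ge0. Qed.

Lemma weight_fx x : w x (f x) = 1.
Proof.
case: (weightP f he x (f x)) => [[H _]|[x0 [_ m ->]]].
  by have := H x; rewrite eqxx.
have := m x erefl; rewrite hamming_xx leqn0 => /eqP ->.
by rewrite mul0r oppr0 expR0.
Qed.

Lemma weight_nb x y t : (hamming x y <= 1)%N -> w x t <= expR (e / 2) * w y t.
Proof.
move=> hxy.
case: (weightP f he x t) => [[_ ->]|[x0 [fx0 m0 ->]]].
  by rewrite mulr_ge0 ?expR_ge0 ?weight_ge0.
case: (weightP f he y t) => [[H _]|[x1 [fx1 m1 ->]]].
  by have := H x0; rewrite fx0 eqxx.
rewrite -expRD ler_expR.
have : (hamming y x1 <= 1 + hamming x x0)%N.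
  apply: (leq_trans (m1 x0 fx0)); apply: (leq_trans (hamming_tri y x x0)).
  by rewrite leq_add2r hamming_sym.
rewrite -(ler_nat R) natrD.
have c0 : 0 < e / 2 by rewrite divr_gt0.
move: c0; set c := e / 2; move=> c0 hh.
nra.
Qed.

Lemma Z_ge1 x : 1 <= \sum_s w x s.
Proof.
rewrite (bigD1 (f x)) //= weight_fx lerDl.
by apply: sumr_ge0 => s _; apply: weight_ge0.
Qed.

End Main.

Theorem corollary3p1 (R : realType) (X : eqType) (n : nat) (T : finType)
  (f : n.-tuple X -> T) (eps : R) (heps : 0 < eps) :
  diff_private (4 * eps) (inv_sens_mech f (4 * eps)) /\
  forall Munb : mechanism R X n T,
    is_mechanism Munb ->
    diff_private eps Munb ->
    unbiased (@L01 R T) f Munb ->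
    forall x : n.-tuple X,
      exp_loss (@L01 R T) (inv_sens_mech f (4 * eps)) x (f x)
      <= exp_loss (@L01 R T) Munb x (f x).
Proof.
have he : 0 < 4 * eps by rewrite mulr_gt0.
have Zgt0 : forall x, 0 < \sum_s inv_sens_weight f (4 * eps) x s.
  by move=> x; apply: lt_le_trans (Z_ge1 f he x).
split.
  move=> x y hxy S; rewrite /prob /inv_sens_mech mulr_sumr.
  apply: ler_sum => t _.
  set c := expR (4 * eps / 2).
  set Zx := \sum_s _ x s; set Zy := \sum_s _ y s.
  have hw := weight_nb f he t hxy.
  have hZ : Zy <= c * Zx.
    rewrite /Zy /Zx mulr_sumr; apply: ler_sum => s _.
    by apply: (weight_nb f he); rewrite hamming_sym.
  have -> : expR (4 * eps) = c * c by rewrite /c -expRD; congr expR; lra.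
  rewrite ler_pdivrMr ?Zgt0 //.
  apply: (le_trans hw).
  have Zy0 : Zy != 0 by rewrite gt_eqF ?Zgt0.
  have -> : c * c * (inv_sens_weight f (4 * eps) y t / Zy) * Zx
     = (c * inv_sens_weight f (4 * eps) y t) * (c * Zx / Zy) by field.
  rewrite ler_peMr ?mulr_ge0 ?expR_ge0 ?weight_ge0 //.
  by rewrite ler_pdivlMr ?Zgt0 // mul1r.
move=> Munb mechM dpM unbM x.
have nn : forall y t, 0 <= Munb y t by move=> y t; case: (mechM y) => h _; apply: h.
have sum1 : \sum_s Munb x s = 1 by case: (mechM x).
rewrite !exp_loss01 sum1 /inv_sens_mech -mulr_suml (weight_fx f he).
set Z := \sum_s _.
have Z0 : 0 < Z by apply: Zgt0.
rewrite divff ?gt_eqF // lerD2l lerN2 ler_pdivlMr // mulr_sumr.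
apply: (@le_trans _ _ (\sum_s Munb x s)); last by rewrite sum1.
apply: ler_sum => t _.
case: (weightP f he x t) => [[_ ->]|[x0 [fx0 m0 ->]]].
  by rewrite mulr0 nn.
set k := hamming x x0.
have h1 : Munb x (f x) <= expR (k%:R * eps) * Munb x0 (f x) by apply: group_dp.
have h2 : Munb x0 (f x) <= Munb x0 t.
  by have := unbM x0 (f x); rewrite !exp_loss01 fx0 lerD2l lerN2.
have h3 : Munb x0 t <= expR (k%:R * eps) * Munb x t.
  by apply: group_dp => //; rewrite hamming_sym.
have hp : Munb x (f x) <= expR (k%:R * eps + k%:R * eps) * Munb x t.
  rewrite expRD -mulrA; apply: (le_trans h1); rewrite ler_wpM2l ?expR_ge0 //.
  exact: le_trans h2 h3.
have -> : k%:R * (4 * eps / 2) = k%:R * eps + k%:R * eps by lra.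
rewrite expRN ler_pdivrMr ?expR_gt0 //.
by rewrite mulrC.
Qed.
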